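(* Let $X$ be a finite simple graph and let $k=\alpha_q(X)$. Then $\alpha_q(X)>\alpha(X)$ if and only if every quantum $k$-coclique matrix $P=(P_{vi})$ for $X$ (in any dimension $d$) is Kochen–Specker, i.e. there is no choice of vertices $v_1,\dots,v_k\in V(X)$ such that $P_{v_i i}P_{v_j j}\neq 0$ for all $i\neq j$ in $[k]$.
   Context: All graphs are finite and simple; $\alpha(X)$ is the independence number of $X$. For a finite simple graph $X$ and positive integers $s,d$, a quantum $s$-coclique matrix (in dimension $d$) is a $|V(X)|\times s$ array $P=(P_{vi})_{v\in V(X),\, i\in[s]}$ of orthogonal projections $P_{vi}\in\mathbb{C}^{d\times d}$ such that (a) $\sum_{v\in V(X)}P_{vi}=I_d$ for every $i\in[s]$; (b) $P_{vi}P_{uj}=0$ for all $i\neq j$ in $[s]$ and all adjacent vertices $u\sim v$; (c) $P_{vi}P_{vj}=0$ for all $v\in V(X)$ and all $i\neq j$ in $[s]$. The quantum independence number $\alpha_q(X)$ is the largest $s$ such that a quantum $s$-coclique matrix for $X$ exists for some $d\ge 1$. (In the paper's terminology, the condition on $P$ says that the orthogonality graph of the entries of $P$, with the columns $\{P_{vi}:v\in V(X)\}$ as the cliques, is a projective Kochen–Specker graph: every transversal choosing one entry from each column contains two orthogonal entries, where projections $A,B$ are orthogonal iff $\operatorname{tr}(AB)=0$, equivalently $AB=0$.) *)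

(* Defs.v *)
From HB Require Import structures.
From mathcomp Require Import all_boot all_order all_algebra.
From mathcomp Require Import complex.
From mathcomp Require Import Rstruct.
Set Implicit Arguments. Unset Strict Implicit. Unset Printing Implicit Defensive.
Import Order.TTheory GRing.Theory Num.Theory.
Local Open Scope ring_scope.

Definition CC : Type := complex Rdefinitions.R.

Definition adjmx (d : nat) (A : 'M[CC]_d) : 'M[CC]_d := map_mx Num.conj (A^T).

Definition is_proj (d : nat) (A : 'M[CC]_d) : Prop :=
  A *m A = A /\ adjmx A = A.

Definition simple_graph (T : finType) (adj : rel T) : Prop :=
  symmetric adj /\ irreflexive adj.

Definition independent (T : finType) (adj : rel T) (S : {set T}) : bool :=
  [forall u in S, forall v in S, ~~ adj u v].

Definition alpha (T : finType) (adj : rel T) : nat :=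
  \max_(S : {set T} | independent adj S) #|S|.

Definition qcoclique (T : finType) (adj : rel T) (s d : nat)
  (P : T -> 'I_s -> 'M[CC]_d) : Prop :=
  [/\ (forall v i, is_proj (P v i)),
      (forall i, \sum_(v : T) P v i = 1%:M),
      (forall (i j : 'I_s) (u v : T), i != j -> adj u v -> P v i *m P u j = 0)
    & (forall (v : T) (i j : 'I_s), i != j -> P v i *m P v j = 0)].

Definition has_qcoclique (T : finType) (adj : rel T) (s : nat) : Prop :=
  exists (d : nat) (P : T -> 'I_s -> 'M[CC]_d.+1), qcoclique adj P.

Definition is_alpha_q (T : finType) (adj : rel T) (k : nat) : Prop :=
  [/\ (0 < k)%N, has_qcoclique adj k & forall s, (0 < s)%N -> has_qcoclique adj s -> (s <= k)%N].

Definition kochen_specker (T : finType) (k d : nat) (P : T -> 'I_k -> 'M[CC]_d) : Prop :=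
  ~ exists f : 'I_k -> T,
      forall i j : 'I_k, i != j -> P (f i) i *m P (f j) j != 0.

(* Main.v *)
Require Import Defs.
From HB Require Import structures.
From mathcomp Require Import all_boot all_order all_algebra.
From mathcomp Require Import complex Rstruct.
Local Open Scope ring_scope.
Import GRing.Theory Num.Theory.

Lemma adj1 : adjmx (1 : 'M[CC]_(0.+1)) = 1.
Proof. by rewrite /adjmx trmx1 map_mx1. Qed.
Lemma adj0 : adjmx (0 : 'M[CC]_(0.+1)) = 0.
Proof. by rewrite /adjmx trmx0 map_mx0. Qed.

Lemma t1 (T : finType) k (g : 'I_k -> T) v i :
  is_proj (if v == g i then (1 : 'M[CC]_(0.+1)) else 0).
Proof. case: ifP => _; split; by rewrite ?mul1mx ?mul0mx ?adj1 ?adj0. Qed.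
Lemma t2 (T : finType) k (g : 'I_k -> T) i :
  \sum_(v : T) (if v == g i then (1 : 'M[CC]_(0.+1)) else 0) = 1%:M.
Proof. rewrite (bigD1 (g i)) //= eqxx big1 ?addr0 // => v /negbTE -> //. Qed.
Lemma t3 (T : finType) (adj : rel T) k (g : 'I_k -> T) :
  (forall i j, ~~ adj (g i) (g j)) ->
  forall (i j : 'I_k) (u v : T), i != j -> adj u v ->
  (if v == g i then (1 : 'M[CC]_(0.+1)) else 0) *m (if u == g j then 1 else 0) = 0.
Proof.
move=> ind i j u v nij a.
case: ifP => [/eqP e1|_]; last by rewrite mul0mx.
case: ifP => [/eqP e2|_]; last by rewrite mulmx0.
by subst u v; move: (ind j i); rewrite a.
Qed.
Lemma t4 (T : finType) k (g : 'I_k -> T) : injective g ->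
  forall (v : T) (i j : 'I_k), i != j ->
  (if v == g i then (1 : 'M[CC]_(0.+1)) else 0) *m (if v == g j then 1 else 0) = 0.
Proof.
move=> ginj v i j nij.
case: ifP => [/eqP e1|_]; last by rewrite mul0mx.
case: ifP => [/eqP e2|_]; last by rewrite mulmx0.
by move: nij; rewrite -(ginj _ _ (etrans (esym e1) e2)) eqxx.
Qed.
Lemma t5 (T : finType) (adj : rel T) k (g : 'I_k -> T) : injective g ->
  (forall i j, ~~ adj (g i) (g j)) ->
  qcoclique adj (fun v i => if v == g i then (1 : 'M[CC]_(0.+1)) else 0).
Proof.
move=> gi ind; split; [exact: t1 | exact: t2 | exact: t3 | exact: t4].
Qed.
Lemma t6 (T : finType) k (g : 'I_k -> T) : 
  ~ kochen_specker (fun v i => if v == g i then (1 : 'M[CC]_(0.+1)) else 0).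
Proof. by apply; exists g => i j nij; rewrite !eqxx mul1mx oner_neq0. Qed.

Theorem mainTheorem4 (T : finType) (adj : rel T) (k : nat) :
  simple_graph adj ->
  is_alpha_q adj k ->
  ((alpha adj < k)%N <->
   (forall (d : nat) (P : T -> 'I_k -> 'M[CC]_d.+1),
      qcoclique adj P -> kochen_specker P)).
Proof.
move=> [_ irr] [kpos hq kmax]; split.
- move=> ltak d P [Pproj Psum Padj Pvv] [f Hf].
  have finj : injective f.
    move=> i j eq; apply/eqP; apply/negPn/negP => nij.
    by move/(_ i j nij): Hf; rewrite eq Pvv // eqxx.
  have indS : independent adj [set f i | i : 'I_k].
    apply/forallP => u; apply/implyP => /imsetP [i _ ->].
    apply/forallP => v; apply/implyP => /imsetP [j _ ->].
    case: (eqVneq i j) => [->|nij]; first by rewrite irr.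
    apply/negP => a.
    have nji : j != i by rewrite eq_sym.
    by move: (Hf j i nji); rewrite (Padj j i (f i) (f j) nji a) eqxx.
  have : (#|[set f i | i : 'I_k]| <= alpha adj)%N.
    by rewrite /alpha; apply: (leq_bigmax_cond (F := fun S : {set T} => #|S|)).
  by rewrite card_imset // card_ord leqNgt ltak.
- move=> H; rewrite ltnNge; apply/negP => kla.
  have ind0 : independent adj set0 by apply/forallP => u; rewrite in_set0.
  case: (@arg_maxnP _ set0 (independent adj) (fun S => #|S|) ind0) => S indS maxS.
  have aS : (alpha adj <= #|S|)%N by apply/bigmax_leqP => A; exact: maxS.
  have HkS : (k <= #|S|)%N by apply: leq_trans aS.
  pose g (i : 'I_k) : T := @enum_val T (mem S) (widen_ord HkS i).
  have ginj : injective g by move=> i j /enum_val_inj/(congr1 val) /= /val_inj.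
  have gS : forall i, g i \in S by move=> i; exact: enum_valP.
  clearbody g.
  have ind : forall i j, ~~ adj (g i) (g j).
    move=> i j; move/forallP/(_ (g i)): indS => /implyP/(_ (gS i))/forallP/(_ (g j)).
    by move=> /implyP/(_ (gS j)).
  exact: (@t6 T k g (H 0%N _ (@t5 T adj k g ginj ind))).
Qed.
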